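(* Let $\mathfrak{A}=\{\mathscr{M}^{KI},\mathscr{M}^{KK},\mathscr{A}^{KI},\mathscr{A}^{KK},\mathscr{H}^{KI},\mathscr{H}^{KK}\}$. Then the graph parameters $p_{\mathfrak{A}}$ and $\widetilde{\omega}$ are equivalent, i.e. there exist functions $f,g\colon\mathbb{N}\to\mathbb{N}$ such that $p_{\mathfrak{A}}(G)\le f(\widetilde{\omega}(G))$ and $\widetilde{\omega}(G)\le g(p_{\mathfrak{A}}(G))$ for every finite graph $G$.
   Context: Two vertices are equivalent if they lie in exactly the same maximal cliques; $\widetilde{\omega}(G)$ is the maximum over maximal cliques $K$ of $G$ of the number of equivalence classes meeting $K$. For each $n\ge1$ let $X=\{x_1,\dots,x_n\}$, $Y=\{y_1,\dots,y_n\}$ be disjoint ordered sets. The matching has edges $x_iy_i$; the anti-matching has edges $x_iy_j$ for $i\neq j$; the half-graph has edges $x_iy_j$ for $i\le j$. $\mathscr{M}^{KI}_n$ (resp. $\mathscr{A}^{KI}_n$, $\mathscr{H}^{KI}_n$) is the graph on $X\cup Y$ consisting of the matching (resp. anti-matching, half-graph) between $X$ and $Y$ together with all edges within $X$ (so $X$ is a clique and $Y$ independent); $\mathscr{M}^{KK}_n$, $\mathscr{A}^{KK}_n$, $\mathscr{H}^{KK}_n$ are obtained by additionally making $Y$ a clique. For a family $\mathfrak{F}$ of sequences $\langle\mathscr{X}_n\rangle_n$, $p_{\mathfrak{F}}(G)$ is the maximum $n$ such that some $\mathscr{X}\in\mathfrak{F}$ has $\mathscr{X}_n$ as an induced subgraph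 of $G$. *)

(* Defs.v *)
(* finite simple graphs as symmetric irreflexive relations
   on a finType. *)
From mathcomp Require Import all_boot.
Set Implicit Arguments. Unset Strict Implicit. Unset Printing Implicit Defensive.

Section GraphDefs.
Variables (T : finType) (e : rel T).

Definition is_clique (A : {set T}) : bool :=
  [forall x in A, forall y in A, (x != y) ==> e x y].

Definition is_maxclique (A : {set T}) : bool :=
  is_clique A && [forall B : {set T}, (is_clique B && (A \subset B)) ==> (B == A)].

Definition vequiv (x y : T) : bool :=
  [forall K : {set T}, is_maxclique K ==> ((x \in K) == (y \in K))].

Definition vclass (x : T) : {set T} := [set y | vequiv x y].

Definition nclasses (K : {set T}) : nat := #|[set vclass x | x in K]|.

Definition omega_tilde : nat := \max_(K : {set T} | is_maxclique K) nclasses K.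

Definition induced_sub (V : finType) (h : rel V) : bool :=
  [exists f : {ffun V -> T},
     injectiveb f && [forall u, forall v, e (f u) (f v) == h u v]].

End GraphDefs.

Inductive bip := Match | Anti | Half.

Definition bip_edge (t : bip) (n : nat) (i j : 'I_n) : bool :=
  match t with
  | Match => i == j
  | Anti => i != j
  | Half => (i <= j)%N
  end.

(* Vertex set X u Y encoded as 'I_n + 'I_n: inl i = x_{i+1}, inr j = y_{j+1}.
   X is always a clique; Y is a clique iff kk (KK-variant), else independent. *)
Definition model_rel (t : bip) (kk : bool) (n : nat) : rel ('I_n + 'I_n) :=
  fun u v =>
    match u, v with
    | inl i, inl j => i != j
    | inr i, inr j => kk && (i != j)
    | inl i, inr j => bip_edge t i j
    | inr i, inl j => bip_edge t j i
    end.
Arguments model_rel : clear implicits.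

Definition has_A_model (T : finType) (e : rel T) (n : nat) : bool :=
  has (fun t => has (fun kk => induced_sub e (model_rel t kk n)) [:: false; true])
      [:: Match; Anti; Half].

(* p_A(G): the maximum n >= 1 with such an induced subgraph (0 if none).
   Any such n satisfies 2n <= |V(G)|, so restricting to n <= |V(G)| loses
   nothing. *)
Definition p_A (T : finType) (e : rel T) : nat :=
  \max_(n < #|T|.+1 | (0 < n)%N && has_A_model e n) n.

(* Main.v *)
Require Import Defs.
From mathcomp Require Import all_boot zify.
Set Implicit Arguments. Unset Strict Implicit. Unset Printing Implicit Defensive.

Definition hom (c : nat -> nat -> bool) (b : bool) (t : seq nat) :=
  forall i j, i \in t -> j \in t -> i < j -> c i j = b.

Lemma hom_cons c b x t : (forall j, j \in t -> c x j = b) -> all (ltn x) t ->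
  hom c b t -> hom c b (x :: t).
Proof.
move=> Hx Hall Ht i j; rewrite !inE => /predU1P[->|Hi] /predU1P[->|Hj] Hij.
- by rewrite ltnn in Hij.
- exact: Hx.
- by move/allP: Hall => /(_ i Hi) Hxi; rewrite /= in Hxi; lia.
- exact: Ht.
Qed.

Lemma ramsey (c : nat -> nat -> bool) k : forall l s, sorted ltn s ->
  2 ^ (k + l) <= size s -> exists t, [/\ subseq t s, sorted ltn t &
    ((size t = k /\ hom c false t) \/ (size t = l /\ hom c true t))].
Proof.
elim: k => [|k IHk] l s Hs Hsz.
  exists [::]; split => //; first exact: sub0seq.
  by left; split => // i j; rewrite in_nil.
elim: l s Hs Hsz => [|l IHl] s Hs Hsz.
  exists [::]; split => //; first exact: sub0seq.
  by right; split => // i j; rewrite in_nil.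
case: s Hs Hsz => [|x s'] Hs Hsz.
  by have := expn_gt0 2 (k.+1 + l.+1); rewrite /= in Hsz; lia.
have Hs' : sorted ltn s' := path_sorted Hs.
have Hx : all (ltn x) s' := order_path_min ltn_trans Hs.
set s1 := [seq y <- s' | c x y].
set s0 := [seq y <- s' | predC (c x) y].
have Hcnt : size s1 + size s0 = size s'.
  by rewrite !size_filter; exact: (count_predC (c x)).
have Hs0 : sorted ltn s0 by exact: (sorted_filter ltn_trans _ Hs').
have Hs1 : sorted ltn s1 by exact: (sorted_filter ltn_trans _ Hs').
have E1 : 2 ^ (k.+1 + l.+1) = 2 ^ (k + l.+1) + 2 ^ (k.+1 + l).
  by rewrite addSn expnS addnS mul2n -addnn.
rewrite /= E1 in Hsz.
case: (leqP (2 ^ (k + l.+1)) (size s0)) => H0.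
- have [t [Hsub Hts Hc]] := IHk l.+1 s0 Hs0 H0.
  have Hsub' : subseq t s' := subseq_trans Hsub (filter_subseq _ _).
  case: Hc => [[Hsz' Hh]|[Hsz' Hh]].
  + exists (x :: t); split.
    * by rewrite /= eqxx.
    * rewrite /= path_min_sorted //; apply/allP => j Hj.
      by move/allP: Hx; apply; exact: (mem_subseq Hsub').
    * left; split; first by rewrite /= Hsz'.
      apply: hom_cons => //.
      -- move=> j Hj; have := mem_subseq Hsub Hj; rewrite mem_filter /=.
         by case/andP => /negbTE.
      -- by apply/allP => j Hj; move/allP: Hx; apply; exact: (mem_subseq Hsub').
  + exists t; split => //; last by right.
    exact: (subseq_trans Hsub' (subseq_cons _ _)).
- have H1 : 2 ^ (k.+1 + l) <= size s1 by lia.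
  have [t [Hsub Hts Hc]] := IHl s1 Hs1 H1.
  have Hsub' : subseq t s' := subseq_trans Hsub (filter_subseq _ _).
  case: Hc => [[Hsz' Hh]|[Hsz' Hh]].
  + exists t; split => //; last by left.
    exact: (subseq_trans Hsub' (subseq_cons _ _)).
  + exists (x :: t); split.
    * by rewrite /= eqxx.
    * rewrite /= path_min_sorted //; apply/allP => j Hj.
      by move/allP: Hx; apply; exact: (mem_subseq Hsub').
    * right; split; first by rewrite /= Hsz'.
      apply: hom_cons => //.
      -- move=> j Hj; have := mem_subseq Hsub Hj; rewrite mem_filter /=.
         by case/andP.
      -- by apply/allP => j Hj; move/allP: Hx; apply; exact: (mem_subseq Hsub').
Qed.

Lemma split_seq (T T' : finType) (e : rel T) (cl : T -> T') (K : {set T}) k :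
  forall A : {set T},
  (forall x y, x \in A -> y \in A -> cl x != cl y ->
     exists2 w, w \notin K & e w x != e w y) ->
  2 ^ k <= #|cl @: A| ->
  exists a b : nat -> T, exists c : nat -> bool, forall i j, i < k -> j < k ->
   [/\ a i \in A, b i \notin K, (i < j -> e (b i) (a j) = c i) &
       e (b i) (a i) = ~~ c i].
Proof.
elim: k => [|k IHk] A HA Hsz.
  have /card_gt0P [z /imsetP [x0 _ _]] : 0 < #|cl @: A| by [].
  by exists (fun _ => x0), (fun _ => x0), (fun _ => true) => i j; rewrite ltn0.
have : 1 < #|cl @: A| by have := expn_gt0 2 k; rewrite expnS in Hsz; lia.
case/card_gt1P => u [v [/imsetP [x Hx ->] /imsetP [y Hy ->] Hxy]].
have [w HwK Hw] := HA x y Hx Hy Hxy.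
have main : forall cb, 2 ^ k <= #|cl @: [set z in A | e w z == cb]| ->
    (exists2 a0, a0 \in A & e w a0 = ~~ cb) ->
    exists a b : nat -> T, exists c : nat -> bool, forall i j, i < k.+1 -> j < k.+1 ->
   [/\ a i \in A, b i \notin K, (i < j -> e (b i) (a j) = c i) &
       e (b i) (a i) = ~~ c i].
  move=> cb Hc [a0 Ha0 Hwa0].
  have HA' : forall x y, x \in [set z in A | e w z == cb] -> y \in [set z in A | e w z == cb] -> cl x != cl y ->
     exists2 w, w \notin K & e w x != e w y.
    by move=> x' y'; rewrite !inE => /andP[Hx' _] /andP[Hy' _]; exact: HA.
  have [a [b [c Habc]]] := IHk _ HA' Hc.
  exists (fun i => if i is i'.+1 then a i' else a0),
         (fun i => if i is i'.+1 then b i' else w),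
         (fun i => if i is i'.+1 then c i' else cb).
  case=> [|i] [|j] Hi Hj /=.
  - by split.
  - have [Haj _ _ _] := Habc j j Hj Hj.
    by split => // _; move: Haj; rewrite inE => /andP[_ /eqP].
  - have [Hai Hbi _ Hd] := Habc i i Hi Hi.
    by split => //; move: Hai; rewrite inE => /andP[].
  - have [Hai Hbi H1 Hd] := Habc i j Hi Hj.
    by split => //; move: Hai; rewrite inE => /andP[].
have Hsum : #|cl @: A| <= #|cl @: [set z in A | e w z == true]| +
                         #|cl @: [set z in A | e w z == false]|.
  have E : A = [set z in A | e w z == true] :|: [set z in A | e w z == false].
    by apply/setP => z; rewrite !inE; case: (e w z); rewrite ?andbT ?andbF ?orbF.
  rewrite {1}E imsetU cardsU; lia.
have Hex : forall cb, exists2 a0, a0 \in A & e w a0 = ~~ cb.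
  move=> cb; case Ex: (e w x == cb).
  - exists y => //; move/eqP: Ex Hw => <-; by case: (e w x); case: (e w y).
  - by exists x => //; move: Ex; case: (e w x); case: cb.
rewrite expnS in Hsz.
case: (leqP (2 ^ k) #|cl @: [set z in A | e w z == true]|) => H1.
  exact: (main true H1 (Hex true)).
apply: main (Hex false); lia.
Qed.

Section G.
Variables (T : finType) (e : rel T).
Hypotheses (esy : symmetric e) (eirr : irreflexive e).

Lemma cliqueP (A : {set T}) x y : is_clique e A -> x \in A -> y \in A -> x != y -> e x y.
Proof.
move=> /forallP /(_ x) /implyP Hx xA yA; move: (Hx xA) => /forallP /(_ y) /implyP /(_ yA).
by move/implyP.
Qed.

Lemma maxclique_clique K : is_maxclique e K -> is_clique e K.
Proof. by case/andP. Qed.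

Lemma clique_ext (A : {set T}) : is_clique e A -> exists K, is_maxclique e K && (A \subset K).
Proof.
move=> HA.
have HP : (fun B : {set T} => is_clique e B && (A \subset B)) A by rewrite /= HA subxx.
case: (@arg_maxnP _ A (fun B : {set T} => is_clique e B && (A \subset B)) (fun B : {set T} => #|B|) HP) => K /andP[HK HAK] Hmax.
exists K; rewrite HAK andbT /is_maxclique HK /=.
apply/forallP => B; apply/implyP => /andP[HB HKB].
rewrite eq_sym eqEcard HKB /=; apply: Hmax.
by rewrite /= HB (subset_trans HAK HKB).
Qed.

Lemma vequiv_refl x : vequiv e x x.
Proof. by apply/forallP => K; apply/implyP. Qed.

Lemma vequiv_sym x y : vequiv e x y -> vequiv e y x.
Proof.
move/forallP => H; apply/forallP => K; apply/implyP => HK.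
by move/implyP: (H K) => /(_ HK); rewrite eq_sym.
Qed.

Lemma vequiv_trans x y z : vequiv e x y -> vequiv e y z -> vequiv e x z.
Proof.
move/forallP => H1 /forallP H2; apply/forallP => K; apply/implyP => HK.
move/implyP: (H1 K) => /(_ HK) /eqP ->.
by move/implyP: (H2 K) => /(_ HK).
Qed.

Lemma vclass_eq x y : vclass e x = vclass e y -> vequiv e x y.
Proof.
move=> E; have : y \in vclass e y by rewrite inE vequiv_refl.
by rewrite -E inE.
Qed.

Lemma vequiv_class x y : vequiv e x y -> vclass e x = vclass e y.
Proof.
move=> H; apply/setP => z; rewrite !inE; apply/idP/idP => Hz.
- exact: vequiv_trans (vequiv_sym H) Hz.
- exact: vequiv_trans H Hz.
Qed.

Lemma not_vequiv w x y : e w x -> ~~ e w y -> w != y -> ~~ vequiv e x y.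
Proof.
move=> Hwx Hwy Hwy'.
have Hc : is_clique e [set w; x].
  apply/forallP => u; apply/implyP; rewrite !inE => Hu.
  apply/forallP => v; apply/implyP; rewrite !inE => Hv; apply/implyP => Huv.
  case/orP: Hu => /eqP Hu; case/orP: Hv => /eqP Hv; subst => //.
  - by rewrite eqxx in Huv.
  - by rewrite esy.
  - by rewrite eqxx in Huv.
have [K /andP [HK Hsub]] := clique_ext Hc.
apply/negP => /forallP /(_ K) /implyP /(_ HK).
have -> : x \in K by apply: (subsetP Hsub); rewrite !inE eqxx orbT.
move=> /eqP/esym HyK.
have HwK : w \in K by apply: (subsetP Hsub); rewrite !inE eqxx.
by move: (cliqueP (maxclique_clique HK) HwK HyK Hwy'); rewrite (negbTE Hwy).
Qed.

Lemma sep_half K L x y : is_clique e K -> is_maxclique e L -> x \in L -> y \notin L ->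
  x \in K -> y \in K -> x != y -> exists2 w, w \notin K & e w x && ~~ e w y.
Proof.
move=> HK HL xL yL xK yK xy.
have Hnc : ~~ is_clique e (y |: L).
  apply/negP => Hc; move/andP: HL => [_ /forallP /(_ (y |: L)) /implyP].
  by rewrite Hc subsetUr => /(_ isT) /eqP E; move: yL; rewrite -E setU11.
have [z zL Hzy] : exists2 z, z \in L & ~~ e z y.
  move: Hnc => /forallPn [u]; rewrite negb_imply => /andP [Hu /forallPn [v]].
  rewrite negb_imply => /andP [Hv]; rewrite negb_imply => /andP [Huv Hnuv].
  move: Hu Hv; rewrite !inE => /predU1P [Hu|Hu] /predU1P [Hv|Hv].
  - by subst; rewrite eqxx in Huv.
  - by subst; exists v => //; rewrite esy.
  - by subst; exists u.
  - by move: Hnuv; rewrite (cliqueP (maxclique_clique HL) Hu Hv Huv).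
have zy : z != y by apply/eqP => E; subst; rewrite zL in yL.
have zx : z != x.
  apply/eqP => E; subst; by move: Hzy; rewrite (cliqueP HK xK yK xy).
exists z.
  by apply/negP => zK; move: Hzy; rewrite (cliqueP HK zK yK zy).
by rewrite Hzy (cliqueP (maxclique_clique HL) zL xL zx).
Qed.

Lemma sep_witness K x y : is_maxclique e K -> x \in K -> y \in K -> ~~ vequiv e x y ->
  exists2 w, w \notin K & e w x != e w y.
Proof.
move=> HK xK yK Hxy.
have xy : x != y by apply/eqP => E; subst; rewrite vequiv_refl in Hxy.
have HKc := maxclique_clique HK.
move: Hxy => /forallPn [L]; rewrite negb_imply => /andP [HL].
case xL: (x \in L); case yL: (y \in L) => // _.
- have [w HwK /andP [H1 H2]] := sep_half HKc HL xL (negbT yL) xK yK xy.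
  by exists w => //; rewrite H1; case: (e w y) H2.
- have [w HwK /andP [H1 H2]] := sep_half HKc HL (introT idP yL) (negbT xL) yK xK (introN eqP (fun E => (negP xy) (introT eqP (esym E)))).
  by exists w => //; rewrite H1; case: (e w x) H2.
Qed.

End G.

Section G.
Variables (T : finType) (e : rel T).
Hypotheses (esy : symmetric e) (eirr : irreflexive e).

Lemma bip_sep (t : bip) n (i j : 'I_n) : i != j ->
  (exists v, bip_edge t i v && ~~ bip_edge t j v) \/
  (exists v, bip_edge t j v && ~~ bip_edge t i v).
Proof.
move=> ij; case: t => /=.
- by left; exists i; rewrite eqxx eq_sym ij.
- by left; exists j; rewrite eqxx ij.
- case: (ltngtP i j) => H.
  + by left; exists i; rewrite leqnn -ltnNge.
  + by right; exists j; rewrite leqnn -ltnNge.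
  + by move: ij; rewrite (val_inj H) eqxx.
Qed.

Lemma hasA_ex n : has_A_model e n -> exists t kk, induced_sub e (model_rel t kk n).
Proof.
rewrite /has_A_model /= !orbF.
by case/orP => [/orP[H|H] | /orP[/orP[H|H]|/orP[H|H]]]; do 2 eexists; exact: H.
Qed.

Lemma ex_hasA n t kk : induced_sub e (model_rel t kk n) -> has_A_model e n.
Proof. by case: t; case: kk => H; rewrite /has_A_model /= H ?orbT. Qed.

Lemma model_le_omega n : has_A_model e n -> n <= omega_tilde e.
Proof.
move/hasA_ex => [t [kk /existsP [f /andP [/injectiveP finj /forallP Hf]]]].
have He : forall u v, e (f u) (f v) = model_rel t kk n u v.
  by move=> u v; apply/eqP; exact: (forallP (Hf u) v).
pose X := fun i : 'I_n => f (inl i).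
have Xinj : injective X by move=> i j /finj [].
pose Xs := X @: [set: 'I_n].
have Hc : is_clique e Xs.
  apply/forallP => u; apply/implyP => /imsetP [i _ ->].
  apply/forallP => v; apply/implyP => /imsetP [j _ ->].
  apply/implyP => Hij; rewrite He /=; apply: contraNneq Hij => ->; done.
have [K /andP [HK Hsub]] := clique_ext Hc.
apply: (@leq_trans (nclasses e K)); last first.
  by rewrite /omega_tilde; apply: leq_bigmax_cond.
have -> : n = #|vclass e @: Xs|.
  rewrite card_in_imset; first by rewrite card_imset // cardsT card_ord.
  move=> u v /imsetP [i _ ->] /imsetP [j _ ->] /vclass_eq Hv.
  apply/eqP; apply: contraLR Hv => Hij.
  have ij : i != j by apply: contraNneq Hij => ->.
  have Hw : forall w x y, e (f (inr w)) (f (inl x)) && ~~ e (f (inr w)) (f (inl y)) ->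
      ~~ vequiv e (X x) (X y).
    move=> w x y /andP [H1 H2]; apply: (not_vequiv esy H1 H2).
    by apply/eqP => /finj.
  case: (bip_sep t ij) => [[w Hw']|[w Hw']].
  + by apply: (Hw w); rewrite !He.
  + apply/negP => /(vequiv_sym) H; move: H; apply/negP.
    by apply: (Hw w); rewrite !He.
rewrite /nclasses; apply: subset_leq_card; exact: imsetS.
Qed.

Lemma mk_model (bt : bip) (kk : bool) n (X Y : 'I_n -> T) :
  injective X -> injective Y -> (forall u v, X u != Y v) ->
  (forall u v, e (X u) (X v) = (u != v)) ->
  (forall u v, e (Y u) (Y v) = kk && (u != v)) ->
  (forall u v, e (X u) (Y v) = bip_edge bt u v) ->
  0 < n -> n <= p_A e.
Proof.
move=> Xi Yi XY HX HY HXY n0.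
pose F := [ffun w => match w with inl u => X u | inr v => Y v end].
have Fi : injective F.
  move=> [u|u] [v|v]; rewrite !ffunE.
  - by move/Xi ->.
  - by move=> E; move: (XY u v); rewrite E eqxx.
  - by move=> E; move: (XY v u); rewrite E eqxx.
  - by move/Yi ->.
have Hm : has_A_model e n.
  apply: (@ex_hasA n bt kk).
  apply/existsP; exists F; apply/andP; split; first exact/injectiveP.
  apply/forallP => [[u|u]]; apply/forallP => [[v|v]]; rewrite !ffunE /=.
  - by rewrite HX.
  - by rewrite HXY.
  - by rewrite esy HXY.
  - by rewrite HY.
have Hlt : n < #|T|.+1.
  have := @leq_card _ _ (fun w => F w) Fi; rewrite card_sum card_ord; lia.
rewrite /p_A.
exact: (@leq_bigmax_cond _ (fun i : 'I_#|T|.+1 => (0 < i) && has_A_model e i)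
          (fun i => nat_of_ord i) (Ordinal Hlt) (introT andP (conj n0 Hm))).
Qed.

End G.

Lemma nth_ltn_iff (t : seq nat) p p' : sorted ltn t -> p < size t -> p' < size t ->
  (nth 0 t p < nth 0 t p') = (p < p').
Proof.
move=> Ht Hp Hp'.
have Hm := sorted_ltn_nth ltn_trans 0 Ht.
case: (ltngtP p p') => H.
- by apply: Hm.
- by have := Hm p' p Hp' Hp H; lia.
- by subst; rewrite ltnn.
Qed.

Section G.
Variables (T : finType) (e : rel T).
Hypotheses (esy : symmetric e) (eirr : irreflexive e).

Lemma from_seq (K : {set T}) (HK : is_clique e K) (a b : nat -> T) (cb d q : bool)
  (t : seq nat) n :
  0 < n -> sorted ltn t -> size t = n.+1 ->
  (forall i, i \in t -> a i \in K /\ b i \notin K) ->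
  (forall i j, i \in t -> j \in t -> i < j -> e (b i) (a j) = cb) ->
  (forall i, i \in t -> e (b i) (a i) = ~~ cb) ->
  (forall i j, i \in t -> j \in t -> i < j -> e (b j) (a i) = d) ->
  (forall i j, i \in t -> j \in t -> i < j -> e (b i) (b j) = q) ->
  n <= p_A e.
Proof.
move=> n0 Ht Hsz Hmem H1 H2 H3 H4.
have Hform : forall i j, i \in t -> j \in t ->
    e (b j) (a i) = if i < j then d else if j < i then cb else ~~ cb.
  move=> i j Hi Hj; case: (ltngtP i j) => Hij.
  - exact: H3.
  - exact: H1.
  - by subst; exact: H2.
have ainj : forall i j, i \in t -> j \in t -> a i = a j -> i = j.
  move=> i j Hi Hj E; case: (ltngtP i j) => Hij //.
  - by move: (H1 i j Hi Hj Hij) (H2 i Hi); rewrite E => ->; case: (cb).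
  - by move: (H1 j i Hj Hi Hij) (H2 j Hj); rewrite E => ->; case: (cb).
have binj : forall i j, i \in t -> j \in t -> b i = b j -> i = j.
  move=> i j Hi Hj E; case: (ltngtP i j) => Hij //.
  - by move: (H1 i j Hi Hj Hij) (H2 j Hj); rewrite E => ->; case: (cb).
  - by move: (H1 j i Hj Hi Hij) (H2 i Hi); rewrite E => ->; case: (cb).
have gen : forall (bt : bip) (s r : 'I_n -> 'I_n.+1), injective s -> injective r ->
    (forall u v, (if s u < r v then d else if r v < s u then cb else ~~ cb) = bip_edge bt u v) ->
    n <= p_A e.
  move=> bt s r si ri Hsr.
  have Hin : forall p : 'I_n.+1, nth 0 t p \in t by move=> p; apply: mem_nth; rewrite Hsz.
  have Hlt : forall p p' : 'I_n.+1, (nth 0 t p < nth 0 t p') = (p < p').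
    by move=> p p'; apply: nth_ltn_iff; rewrite ?Hsz.
  have Heq : forall p p' : 'I_n.+1, nth 0 t p = nth 0 t p' -> p = p'.
    move=> p p' E; apply: val_inj => /=.
    have := Hlt p p'; have := Hlt p' p; rewrite E ltnn; lia.
  apply: (@mk_model _ _ esy bt q n (fun u => a (nth 0 t (s u))) (fun v => b (nth 0 t (r v)))) => //.
  - by move=> u u' /(ainj _ _ (Hin _) (Hin _)) E; apply: si; apply: Heq; apply: E.
  - by move=> u u' /(binj _ _ (Hin _) (Hin _)) E; apply: ri; apply: Heq; apply: E.
  - move=> u v; apply/eqP => E.
    have [Ha _] := Hmem _ (Hin (s u)); have [_ Hb] := Hmem _ (Hin (r v)).
    by move: Hb; rewrite -E Ha.
  - move=> u v; case: (eqVneq u v) => [->|uv]; first by rewrite eirr.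
    apply: (cliqueP HK (proj1 (Hmem _ (Hin _))) (proj1 (Hmem _ (Hin _)))).
    apply/eqP => /(ainj _ _ (Hin _) (Hin _)) /Heq /si E; by rewrite E eqxx in uv.
  - move=> u v; case: (eqVneq u v) => [->|uv]; first by rewrite eirr andbF.
    rewrite andbT.
    have Hne : nth 0 t (r u) != nth 0 t (r v).
      by apply/eqP => /Heq /ri E; rewrite E eqxx in uv.
    case: (ltngtP (nth 0 t (r u)) (nth 0 t (r v))) => Hc.
    + exact: H4.
    + by rewrite esy; apply: H4.
    + by rewrite Hc eqxx in Hne.
  - move=> u v; rewrite esy Hform // !Hlt; exact: Hsr.
have Sinj : forall (s : 'I_n -> 'I_n.+1), (forall u v, val (s u) = val (s v) -> u = v) -> injective s.
  by move=> s Hs u v E; apply: Hs; rewrite E.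
case: cb d {H1 H2 H3 Hform ainj binj} gen => [] [] gen.
- apply: (gen Anti (widen_ord (leqnSn n)) (widen_ord (leqnSn n))).
  + by apply: Sinj => u v /= E; apply: val_inj.
  + by apply: Sinj => u v /= E; apply: val_inj.
  + by move=> u v /=; case: ltngtP => H //=; [rewrite neq_ltn H | rewrite neq_ltn H orbT | rewrite (val_inj H) eqxx].
- have Hs : forall u : 'I_n, n - u < n.+1 by move=> u; lia.
  have Hr : forall u : 'I_n, n.-1 - u < n.+1 by move=> u; lia.
  apply: (gen Half (fun u => Ordinal (Hs u)) (fun u => Ordinal (Hr u))).
  + apply: Sinj => u v /= E; apply: ord_inj; have := ltn_ord u; have := ltn_ord v; lia.
  + apply: Sinj => u v /= E; apply: ord_inj; have := ltn_ord u; have := ltn_ord v; lia.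
  + move=> u v /=; have := ltn_ord u; have := ltn_ord v => Hu Hv.
    case: (ltnP (n - u) (n.-1 - v)) => H1; case: (ltnP (n.-1 - v) (n - u)) => H2; case: leqP => H3 //=; lia.
- apply: (gen Half (widen_ord (leqnSn n)) (widen_ord (leqnSn n))).
  + by apply: Sinj => u v /= E; apply: val_inj.
  + by apply: Sinj => u v /= E; apply: val_inj.
  + by move=> u v /=; case: ltngtP => H //=; case: leqP => H3 //; lia.
- apply: (gen Match (widen_ord (leqnSn n)) (widen_ord (leqnSn n))).
  + by apply: Sinj => u v /= E; apply: val_inj.
  + by apply: Sinj => u v /= E; apply: val_inj.
  + move=> u v /=; case: ltngtP => H //=.
    * by apply/esym/eqP => E; move: H; rewrite E ltnn.
    * by apply/esym/eqP => E; move: H; rewrite E ltnn.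
    * by rewrite (val_inj H) eqxx.
Qed.

End G.

Definition Hb (n : nat) := 2 * 2 ^ (2 ^ (n.+1 + n.+1) + 2 ^ (n.+1 + n.+1)).

Section G.
Variables (T : finType) (e : rel T).
Hypotheses (esy : symmetric e) (eirr : irreflexive e).

Lemma omega_small n : 0 < n -> 2 ^ (Hb n) <= omega_tilde e -> n <= p_A e.
Proof.
move=> n0 Hom.
have [K /andP [HK Hc]] : exists K, is_maxclique e K && (2 ^ (Hb n) <= nclasses e K).
  case: (boolP [exists K, is_maxclique e K && (2 ^ (Hb n) <= nclasses e K)]).
    by move/existsP.
  move/existsPn => Hno; exfalso.
  have : omega_tilde e <= (2 ^ (Hb n)).-1.
    apply/bigmax_leqP => K HK; move: (Hno K); rewrite HK /= -ltnNge.
    have := expn_gt0 2 (Hb n); lia.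
  have := expn_gt0 2 (Hb n); lia.
have HKc := maxclique_clique HK.
have HA : forall x y, x \in K -> y \in K -> vclass e x != vclass e y ->
    exists2 w, w \notin K & e w x != e w y.
  move=> x y xK yK Hxy; apply: (sep_witness esy HK xK yK).
  by apply: contra Hxy => /vequiv_class ->.
have [a [b [c Habc]]] := split_seq HA Hc.
set R := 2 ^ (n.+1 + n.+1).
set M := 2 ^ (R + R).
have [cb Hcb] : exists cb, M <= size [seq i <- iota 0 (Hb n) | c i == cb].
  have Hbn : Hb n = M + M by rewrite /Hb -/R -/M; lia.
  have := count_predC c (iota 0 (Hb n)); rewrite size_iota => Hcnt.
  case: (leqP M (count c (iota 0 (Hb n)))) => H1.
  - exists true; rewrite size_filter.
    by rewrite (@eq_count _ _ c) // => i; rewrite eqb_id.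
  - exists false; rewrite size_filter.
    rewrite (@eq_count _ _ (predC c)); first by lia.
    by move=> i; rewrite eqbF_neg.
set s := [seq i <- iota 0 (Hb n) | c i == cb] in Hcb.
have Hs : sorted ltn s by apply: sorted_filter; [exact: ltn_trans | exact: iota_ltn_sorted].
have Hsmem : forall i, i \in s -> i < Hb n /\ c i = cb.
  by move=> i; rewrite mem_filter mem_iota add0n => /andP [/eqP -> /andP[_ ->]].
have [t1 [Hsub1 Ht1 Hc1]] := @ramsey (fun i j => e (b j) (a i)) R R s Hs Hcb.
have [d [Hsz1 Hh1]] : exists d, size t1 = R /\ hom (fun i j => e (b j) (a i)) d t1.
  by case: Hc1 => [[H1 H2]|[H1 H2]]; eexists; split; eassumption.
have Hsz1' : 2 ^ (n.+1 + n.+1) <= size t1 by rewrite Hsz1.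
have [t [Hsub Ht Hc2]] := @ramsey (fun i j => e (b i) (b j)) n.+1 n.+1 t1 Ht1 Hsz1'.
have [q [Hsz Hh2]] : exists q, size t = n.+1 /\ hom (fun i j => e (b i) (b j)) q t.
  by case: Hc2 => [[H1 H2]|[H1 H2]]; eexists; split; eassumption.
have Htmem : forall i, i \in t -> [/\ i \in t1, i < Hb n & c i = cb].
  move=> i Hi; have Hi1 := mem_subseq Hsub Hi.
  by have [H1 H2] := Hsmem i (mem_subseq Hsub1 Hi1).
apply: (@from_seq _ _ esy eirr K HKc a b cb d q t n n0 Ht Hsz).
- move=> i Hi; have [_ Hik _] := Htmem i Hi.
  by have [H1 H2 _ _] := Habc i i Hik Hik.
- move=> i j Hi Hj Hij; have [_ Hik Hci] := Htmem i Hi; have [_ Hjk _] := Htmem j Hj.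
  have [_ _ H3 _] := Habc i j Hik Hjk; by rewrite H3.
- move=> i Hi; have [_ Hik Hci] := Htmem i Hi.
  have [_ _ _ H4] := Habc i i Hik Hik; by rewrite H4 Hci.
- move=> i j Hi Hj Hij; have [Hi1 _ _] := Htmem i Hi; have [Hj1 _ _] := Htmem j Hj.
  exact: Hh1.
- move=> i j Hi Hj Hij; exact: Hh2.
Qed.

End G.

Theorem theorem7p5 :
  exists f g : nat -> nat,
    forall (T : finType) (e : rel T),
      symmetric e -> irreflexive e ->
      (p_A e <= f (omega_tilde e))%N /\ (omega_tilde e <= g (p_A e))%N.
Proof.
exists id, (fun p => 2 ^ (Hb p.+1)) => T e esy eirr; split.
- apply/bigmax_leqP => i /andP [_ Hi]; exact: (model_le_omega esy Hi).
- rewrite leqNgt; apply/negP => Hlt.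
  have := omega_small esy eirr (ltn0Sn (p_A e)) (ltnW Hlt).
  by rewrite ltnn.
Qed.
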